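(* Let $R$ be a ring, $S$ a right Ore set of $R$, and $\mathfrak{a}=\mathrm{ass}_R(S)$. Then \begin{enumerate} \item $S$ is a right localizable set of $R$ if and only if $\mathfrak{a}'\neq R$, where $\mathfrak{a}'=\mathfrak{a}'(S)$. \item Suppose $\mathfrak{a}'\neq R$. Let $\pi':R\to R':=R/\mathfrak{a}'$, $r\mapsto r'=r+\mathfrak{a}'$, and $S'=\pi'(S)$. Then \begin{enumerate} \item $S'$ is a right denominator set of $R'$; \item $\mathfrak{a}=(\pi')^{-1}(\mathrm{ass}_r(S'))$; \item $R\langle S^{-1}\rangle\simeq R'S'^{-1}$, an $R$-isomorphism. \end{enumerate} \end{enumerate}
   Context: Rings are associative with $1$. Multiplicative set: $SS\subseteq S$, $1\in S$, $0\notin S$. Right Ore set: $rS\cap sR\ne\emptyset$ for all $r\in R,s\in S$; right denominator set: right Ore and $sr=0$ ($s\in S$) implies $rt=0$ for some $t\in S$; $AT^{-1}$ denotes the right Ore localization. $\mathrm{ass}_r(T)=\{a: at=0\text{ for some } t\in T\}$. $R\langle S^{-1}\rangle=R\langle X_S\rangle/I_S$ ($R\langle X_S\rangle$ freely generated by $R$ and noncommuting $x_s$; $I_S$ generated by $sx_s-1,x_ss-1$); $\mathrm{ass}_R(S)=\ker(R\to R\langle S^{-1}\rangle)$. $S$ is right localizable if $R\langle S^{-1}\rangle\ne0$ and every element has the form $(r+I_S)(x_s+I_S)$. For a ring $A$, $\mathcal{C}'_A=\{r\in A:rx=0\Rightarrow x=0\}$; $\mathfrak{a}'(S)$ is the least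 ideal $\mathfrak{b}$ of $R$ such that the image of $S$ in $R/\mathfrak{b}$ lies in $\mathcal{C}'_{R/\mathfrak{b}}$ (it exists). *)

(* Defs.v *)
From HB Require Import structures.
From mathcomp Require Import all_boot all_algebra.
Set Implicit Arguments. Unset Strict Implicit. Unset Printing Implicit Defensive.
Import GRing.Theory.
Local Open Scope ring_scope.

Definition mult_set (R : pzRingType) (S : R -> Prop) : Prop :=
  S 1 /\ ~ S 0 /\ (forall a b, S a -> S b -> S (a * b)).

Definition right_Ore (R : pzRingType) (S : R -> Prop) : Prop :=
  mult_set S /\
  (forall r s, S s -> exists s' r', S s' /\ r * s' = s * r').

Definition right_denominator (R : pzRingType) (S : R -> Prop) : Prop :=
  right_Ore S /\
  (forall s r, S s -> s * r = 0 -> exists t, S t /\ r * t = 0).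

Definition ass_r (R : pzRingType) (T : R -> Prop) : R -> Prop :=
  fun a => exists t, T t /\ a * t = 0.

Definition is_inverse (A : pzRingType) (x y : A) : Prop :=
  x * y = 1 /\ y * x = 1.

Definition inverts (R A : pzRingType) (f : R -> A) (S : R -> Prop) : Prop :=
  forall s, S s -> exists y, is_inverse (f s) y.

(* (L, iota) is the universal S-inverting ring R<S^{-1}> = R<X_S>/I_S
   (characterized by its universal property: any ring morphism inverting S
   factors uniquely through iota). ass_R(S) = ker iota. *)
Definition universal_inverting (R : pzRingType) (S : R -> Prop)
    (L : pzRingType) (iota : {rmorphism R -> L}) : Prop :=
  inverts iota S /\
  forall (B : pzRingType) (f : {rmorphism R -> B}), inverts f S ->
    exists g : {rmorphism L -> B},
      (forall r, g (iota r) = f r) /\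
      (forall g' : {rmorphism L -> B}, (forall r, g' (iota r) = f r) ->
         forall x, g' x = g x).

Definition right_localizable (R : pzRingType) (S : R -> Prop)
    (L : pzRingType) (iota : {rmorphism R -> L}) : Prop :=
  (1 : L) <> 0 /\
  forall q : L, exists r s y, S s /\ is_inverse (iota s) y /\ q = iota r * y.

Definition ideal (R : pzRingType) (b : R -> Prop) : Prop :=
  b 0 /\ (forall x y, b x -> b y -> b (x - y)) /\
  (forall r x, b x -> b (r * x) /\ b (x * r)).

(* a'(S): the least ideal b such that the image of S in R/b lies in
   C'_{R/b}, i.e. s x ∈ b implies x ∈ b for s ∈ S (intersection of all such) *)
Definition aprime (R : pzRingType) (S : R -> Prop) : R -> Prop :=
  fun r => forall b : R -> Prop, ideal b ->
    (forall s x, S s -> b (s * x) -> b x) -> b r.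

Definition right_Ore_localization (A : pzRingType) (T : A -> Prop)
    (Q : pzRingType) (sigma : {rmorphism A -> Q}) : Prop :=
  inverts sigma T /\
  (forall q : Q, exists a t y, T t /\ is_inverse (sigma t) y /\ q = sigma a * y) /\
  (forall a, sigma a = 0 <-> ass_r T a).

(* Main.v *)
Require Import Defs.
From HB Require Import structures.
From mathcomp Require Import all_boot all_algebra.
From mathcomp Require Import boolp.
From Stdlib Require Import ProofIrrelevance.
Import GRing.Theory.
Local Open Scope ring_scope.

Section Loc.
Variables (R : pzRingType) (S : R -> Prop) (N : R -> Prop).
Hypothesis S1 : S 1.
Hypothesis SM : forall a b, S a -> S b -> S (a * b).
Hypothesis hore : forall r s, S s -> exists s' r', S s' /\ r * s' = s * r'.
Hypothesis N0 : N 0.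
Hypothesis NB : forall x y, N x -> N y -> N (x - y).
Hypothesis NMl : forall r x, N x -> N (r * x).
Hypothesis NMr : forall r x, N x -> N (x * r).
Hypothesis hNl : forall s x, S s -> N (s * x) -> N x.
Hypothesis hNr : forall s x, S s -> N (x * s) -> N x.

Definition eqv (x y : R) := N (x - y).

Lemma eqvxx x : eqv x x.
Proof. by rewrite /eqv subrr. Qed.
Lemma eqv_eq {x y} : x = y -> eqv x y.
Proof. by move->; apply: eqvxx. Qed.
Lemma NN {x} : N x -> N (- x).
Proof. by rewrite -sub0r; apply: NB. Qed.
Lemma ND {x y} : N x -> N y -> N (x + y).
Proof. by move=> ??; rewrite -[y]opprK; apply: NB => //; apply: NN. Qed.
Lemma eqv_sym {x y} : eqv x y -> eqv y x.
Proof. by rewrite /eqv => h; rewrite -opprB; apply: NN. Qed.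
Lemma eqv_trans {x y z} : eqv x y -> eqv y z -> eqv x z.
Proof. by move=> h1 h2; have := ND h1 h2; rewrite /eqv addrA subrK. Qed.
Lemma eqv_mulr {x y} z : eqv x y -> eqv (x * z) (y * z).
Proof. by move=> h; rewrite /eqv -mulrBl; apply: NMr. Qed.
Lemma eqv_mull {x y} z : eqv x y -> eqv (z * x) (z * y).
Proof. by move=> h; rewrite /eqv -mulrBr; apply: NMl. Qed.
Lemma eqv_add {x x' y y'} : eqv x x' -> eqv y y' -> eqv (x + y) (x' + y').
Proof. by move=> h1 h2; have := ND h1 h2; rewrite /eqv opprD addrACA. Qed.
Lemma eqv_opp {x y} : eqv x y -> eqv (- x) (- y).
Proof. by move=> h; rewrite /eqv -opprD; apply: NN. Qed.
Lemma regl {s x y} : S s -> eqv (s * x) (s * y) -> eqv x y.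
Proof. by rewrite /eqv -mulrBr; apply: hNl. Qed.
Lemma regr {s x y} : S s -> eqv (x * s) (y * s) -> eqv x y.
Proof. by rewrite /eqv -mulrBl; apply: hNr. Qed.

Definition E (p q : R * R) := forall c d, eqv (p.2 * c) (q.2 * d) -> eqv (p.1 * c) (q.1 * d).

Lemma E_refl {p} : S p.2 -> E p p.
Proof. by move=> hs c d /(regl hs) h; apply: eqv_mull. Qed.
Lemma E_sym {p q} : E p q -> E q p.
Proof. by move=> h c d /eqv_sym /h /eqv_sym. Qed.
Lemma E_trans {p q r} : S q.2 -> E p q -> E q r -> E p r.
Proof.
move=> hq h1 h2 c d hcd; have [u [v [hu huv]]] := hore (p.2 * c) _ hq.
have e1 : eqv (p.1 * (c * u)) (q.1 * v).
  by apply: (h1 (c * u) v); rewrite mulrA huv; apply: eqvxx.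
have e2 : eqv (q.1 * v) (r.1 * (d * u)).
  apply: (h2 v (d * u)); rewrite -huv mulrA.
  exact: eqv_mulr _ hcd.
by apply: (regr hu); rewrite -!mulrA; apply: eqv_trans e1 e2.
Qed.

Definition cls (p : R * R) : R * R -> Prop := fun q => S q.2 /\ E p q.
Record LocT := LocC { lset : R * R -> Prop; lsetP : exists p, S p.2 /\ lset = cls p }.

Lemma loc_ext X Y : lset X = lset Y -> X = Y.
Proof. by case: X Y => [x hx] [y hy] /= e; subst; f_equal; apply: proof_irrelevance. Qed.

Definition mkp (a s : R) : R * R := if pselect (S s) then (a, s) else (0, 1).
Lemma mkpS a s : S (mkp a s).2.
Proof. by rewrite /mkp; case: pselect. Qed.
Lemma mkpE a s : S s -> mkp a s = (a, s).
Proof. by rewrite /mkp; case: pselect. Qed.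
Definition mk a s : LocT :=
  @LocC (cls (mkp a s)) (ex_intro (fun p => S p.2 /\ cls (mkp a s) = cls p) (mkp a s) (conj (mkpS a s) erefl)).

Lemma cls_eq p q : S p.2 -> S q.2 -> E p q -> cls p = cls q.
Proof.
move=> hp hq e; apply: funext => r; apply: propext; split => -[hr e'].
  by split => //; apply: E_trans hp (E_sym e) e'.
by split => //; apply: E_trans hq e e'.
Qed.

Lemma mk_eq {a s b t} : S s -> S t -> E (a, s) (b, t) -> mk a s = mk b t.
Proof. by move=> hs ht e; apply: loc_ext => /=; rewrite !mkpE //; apply: cls_eq. Qed.
Lemma mk_inj {a s b t} : S s -> S t -> mk a s = mk b t -> E (a, s) (b, t).
Proof.
move=> hs ht /(congr1 lset) /=; rewrite !mkpE // => e.
have : cls (b, t) (b, t) by split => //; apply: E_refl.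
by rewrite -e => -[].
Qed.

Definition rep (X : LocT) : R * R := sval (cid (lsetP X)).
Lemma repS X : S (rep X).2.
Proof. by rewrite /rep; case: cid => p [] /=. Qed.
Lemma rep_cls X : lset X = cls (rep X).
Proof. by rewrite /rep; case: cid => p [] /=. Qed.
Lemma mk_rep X : X = mk (rep X).1 (rep X).2.
Proof.
apply: loc_ext => /=; rewrite mkpE; last exact: repS.
by rewrite rep_cls -surjective_pairing.
Qed.
Lemma rep_E {a s} : S s -> E (rep (mk a s)) (a, s).
Proof.
move=> hs; have := mk_rep (mk a s); move/(mk_inj hs (repS _)) => e.
exact: E_sym e.
Qed.
Lemma loc_elim X : exists a s, S s /\ X = mk a s.
Proof. by exists (rep X).1, (rep X).2; split; [apply: repS | apply: mk_rep]. Qed.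

Lemma hore' r s : S s -> exists p : R * R, S p.1 /\ r * p.1 = s * p.2.
Proof. by move=> hs; have [u [v [hu e]]] := hore r _ hs; exists (u, v). Qed.
Definition orep (r s : R) : R * R :=
  match pselect (S s) with left hs => sval (cid (@hore' r s hs)) | right _ => (1, 0) end.
Lemma orepP {r s} : S s -> S (orep r s).1 /\ r * (orep r s).1 = s * (orep r s).2.
Proof. by move=> hs; rewrite /orep; case: pselect => // h; case: cid. Qed.

Definition ladd X Y := let p := rep X in let q := rep Y in let o := orep q.2 p.2 in
  mk (p.1 * o.2 + q.1 * o.1) (q.2 * o.1).
Definition lmul X Y := let p := rep X in let q := rep Y in let o := orep q.1 p.2 in
  mk (p.1 * o.2) (q.2 * o.1).
Definition lopp X := mk (- (rep X).1) (rep X).2.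
Definition lzero := mk 0 1.
Definition lone := mk 1 1.

Lemma addE {p q a s b t c1 d1 m1 c d m} :
  E p (a, s) -> E q (b, t) -> eqv (p.2 * c1) m1 -> eqv (q.2 * d1) m1 ->
  eqv (s * c) m -> eqv (t * d) m -> E (p.1 * c1 + q.1 * d1, m1) (a * c + b * d, m).
Proof.
move=> hp hq h1 h2 h3 h4 x y /= hxy.
have e1 : eqv (p.1 * (c1 * x)) (a * (c * y)).
  apply: hp => /=; rewrite !mulrA; apply: eqv_trans (eqv_mulr _ h1) _.
  by apply: eqv_trans hxy (eqv_sym (eqv_mulr _ h3)).
have e2 : eqv (q.1 * (d1 * x)) (b * (d * y)).
  apply: hq => /=; rewrite !mulrA; apply: eqv_trans (eqv_mulr _ h2) _.
  by apply: eqv_trans hxy (eqv_sym (eqv_mulr _ h4)).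
by rewrite !mulrDl -!mulrA; apply: eqv_add.
Qed.

Lemma add_mk a s b t c d m : S s -> S t -> S m -> eqv (s * c) m -> eqv (t * d) m ->
  ladd (mk a s) (mk b t) = mk (a * c + b * d) m.
Proof.
move=> hs ht hm h3 h4; rewrite /ladd.
have [ho1 ho2] := @orepP (rep (mk b t)).2 _ (repS (mk a s)).
apply: mk_eq => //; first by apply: SM => //; apply: repS.
apply: addE (rep_E hs) (rep_E ht) _ _ h3 h4; last by apply: eqvxx.
by rewrite ho2; apply: eqvxx.
Qed.

Lemma mulE {p q a s b t u1 v1 u v} :
  E p (a, s) -> E q (b, t) -> eqv (q.1 * u1) (p.2 * v1) -> eqv (b * u) (s * v) ->
  E (p.1 * v1, q.2 * u1) (a * v, t * u).
Proof.
move=> hp hq h1 h2 x y /= hxy.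
have e1 : eqv (q.1 * (u1 * x)) (b * (u * y)) by apply: hq; rewrite !mulrA.
rewrite -!mulrA; apply: (hp (v1 * x) (v * y)) => /=; rewrite !mulrA.
apply: eqv_trans (eqv_mulr x (eqv_sym h1)) _.
apply: eqv_trans _ (eqv_mulr y h2).
by rewrite -!mulrA.
Qed.

Lemma mul_mk a s b t u v : S s -> S t -> S u -> eqv (b * u) (s * v) ->
  lmul (mk a s) (mk b t) = mk (a * v) (t * u).
Proof.
move=> hs ht hu h; rewrite /lmul.
have [ho1 ho2] := @orepP (rep (mk b t)).1 _ (repS (mk a s)).
apply: mk_eq; [by apply: SM => //; apply: repS | by apply: SM |].
apply: mulE (rep_E hs) (rep_E ht) _ h.
by rewrite ho2; apply: eqvxx.
Qed.

Lemma opp_mk a s : S s -> lopp (mk a s) = mk (- a) s.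
Proof.
move=> hs; rewrite /lopp; apply: mk_eq => //; first exact: repS.
move=> x y /(rep_E hs) /= h; rewrite !mulNr; exact: eqv_opp h.
Qed.

Lemma expand a {s x m} : S s -> S m -> s * x = m -> mk a s = mk (a * x) m.
Proof.
move=> hs hm e; apply: mk_eq => // c d /= h.
rewrite -mulrA; apply: eqv_mull; apply: (regl hs).
by apply: eqv_trans h _; rewrite mulrA e; apply: eqvxx.
Qed.

Lemma add_same a b s : S s -> ladd (mk a s) (mk b s) = mk (a + b) s.
Proof. by move=> hs; rewrite (@add_mk _ _ _ _ 1 1 s) ?mulr1 //; apply: eqvxx. Qed.

Lemma common2 {s t} : S s -> S t -> exists c d, S (s * c) /\ s * c = t * d.
Proof.
move=> hs ht; have [u [v [hu e]]] := hore t _ hs.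
by exists v, u; rewrite -e; split => //; apply: SM.
Qed.

Lemma common3 {s t w} : S s -> S t -> S w ->
  exists n x y z, [/\ S n, s * x = n, t * y = n & w * z = n].
Proof.
move=> hs ht hw; have [c1 [d1 [hm e1]]] := common2 hs ht.
have [c2 [d2 [hn e2]]] := common2 hm hw.
exists (s * c1 * c2), (c1 * c2), (d1 * c2), d2.
by split; [exact: hn | rewrite mulrA | rewrite mulrA -e1 | rewrite e2].
Qed.

Lemma laddA : associative ladd.
Proof.
move=> X Y Z; have [a [s [hs ->]]] := loc_elim X; have [b [t [ht ->]]] := loc_elim Y.
have [c [w [hw ->]]] := loc_elim Z.
have [n [x [y [z [hn ex ey ez]]]]] := common3 hs ht hw.
rewrite (expand a hs hn ex) (expand b ht hn ey) (expand c hw hn ez).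
by rewrite !add_same // addrA.
Qed.

Lemma laddC : commutative ladd.
Proof.
move=> X Y; have [a [s [hs ->]]] := loc_elim X; have [b [t [ht ->]]] := loc_elim Y.
have [c [d [hn e]]] := common2 hs ht.
rewrite (expand a hs hn erefl) (expand b ht hn (esym e)).
by rewrite !add_same // addrC.
Qed.

Lemma ladd0 : left_id lzero ladd.
Proof.
move=> X; have [a [s [hs ->]]] := loc_elim X; rewrite /lzero.
by rewrite (expand 0 S1 hs (mul1r s)) add_same // mul0r add0r.
Qed.

Lemma laddN : left_inverse lzero lopp ladd.
Proof.
move=> X; have [a [s [hs ->]]] := loc_elim X; rewrite /lzero.
by rewrite (expand 0 S1 hs (mul1r s)) opp_mk // add_same // mul0r addNr.
Qed.


Ltac sS := solve [repeat (assumption || apply: SM)].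

Lemma lmulA : associative lmul.
Proof.
move=> X Y Z; have [a [s [hs ->]]] := loc_elim X; have [b [t [ht ->]]] := loc_elim Y.
have [c [w [hw ->]]] := loc_elim Z.
have [u3 [v3 [hu3 e3]]] := hore c _ ht.
have [u1 [v1 [hu1 e1]]] := hore b _ hs.
have [u4 [v5 [hu4 e4]]] := hore v3 _ hu1.
rewrite (mul_mk b t c w u3 v3 ht hw hu3 (eqv_eq e3)) (mul_mk a s b t u1 v1 hs ht hu1 (eqv_eq e1)).
rewrite (@mul_mk a s (b * v3) (w * u3) u4 (v1 * v5)); try sS; last first.
  by apply: eqv_eq; rewrite -mulrA e4 mulrA e1 mulrA.
rewrite (@mul_mk (a * v1) (t * u1) c w (u3 * u4) v5); try sS; last first.
  by apply: eqv_eq; rewrite mulrA e3 -!mulrA e4.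
by rewrite !mulrA.
Qed.

Lemma lmul1 : left_id lone lmul.
Proof.
move=> X; have [b [t [ht ->]]] := loc_elim X; rewrite /lone.
rewrite (@mul_mk 1 1 b t 1 b); try sS; first by rewrite mul1r mulr1.
by apply: eqv_eq; rewrite mul1r mulr1.
Qed.

Lemma lmulr1 : right_id lone lmul.
Proof.
move=> X; have [a [s [hs ->]]] := loc_elim X; rewrite /lone.
rewrite (@mul_mk a s 1 1 s 1); try sS; first by rewrite mul1r mulr1.
by apply: eqv_eq; rewrite mul1r mulr1.
Qed.

Lemma lmulDl : left_distributive lmul ladd.
Proof.
move=> X Y Z; have [a [s [hs ->]]] := loc_elim X; have [b [t [ht ->]]] := loc_elim Y.
have [c [w [hw ->]]] := loc_elim Z.
have [c1 [d1 [hm e]]] := common2 hs ht.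
rewrite (expand a hs hm erefl) (expand b ht hm (esym e)) add_same //.
have [u [v [hu ev]]] := hore c _ hm.
rewrite !(@mul_mk _ (s * c1) c w u v); try sS; try exact: eqv_eq.
by rewrite add_same ?mulrDl; try sS.
Qed.

Lemma lmulDr : right_distributive lmul ladd.
Proof.
move=> X Y Z; have [a [s [hs ->]]] := loc_elim X; have [b [t [ht ->]]] := loc_elim Y.
have [c [w [hw ->]]] := loc_elim Z.
have [c1 [d1 [hm e]]] := common2 ht hw.
rewrite (expand b ht hm erefl) (expand c hw hm (esym e)) add_same //.
set m := t * c1; set b' := b * c1; set c' := c * d1.
have [u1 [v1 [hu1 e1]]] := hore b' _ hs.
have [u2 [v2 [hu2 e2]]] := hore (c' * u1) _ hs.
rewrite (@mul_mk a s (b' + c') m (u1 * u2) (v1 * u2 + v2)); try sS; last first.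
  by apply: eqv_eq; rewrite mulrDl mulrDr mulrA e1 mulrA e2 mulrA.
rewrite (@mul_mk a s b' m (u1 * u2) (v1 * u2)); try sS; last first.
  by apply: eqv_eq; rewrite mulrA e1 mulrA.
rewrite (@mul_mk a s c' m (u1 * u2) v2); try sS; last first.
  by apply: eqv_eq; rewrite mulrA e2.
by rewrite add_same ?mulrDr; try sS.
Qed.

HB.instance Definition _ := gen_eqMixin LocT.
HB.instance Definition _ := gen_choiceMixin LocT.
HB.instance Definition _ := GRing.isZmodule.Build LocT laddA laddC ladd0 laddN.
HB.instance Definition _ := GRing.Zmodule_isPzRing.Build LocT lmulA lmul1 lmulr1 lmulDl lmulDr.

Definition f0 (r : R) : LocT := mk r 1.

Lemma f0_zmod : zmod_morphism f0.
Proof.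
move=> x y; rewrite /f0.
rewrite -[RHS]/(ladd (mk x 1) (lopp (mk y 1))) opp_mk // add_same //.
Qed.

Lemma f0_mon : monoid_morphism f0.
Proof.
split; first reflexivity.
move=> x y; rewrite /f0 -[RHS]/(lmul (mk x 1) (mk y 1)).
rewrite (@mul_mk x 1 y 1 1 y) //; first by rewrite mulr1.
by apply: eqv_eq; rewrite mulr1 mul1r.
Qed.

HB.instance Definition _ := GRing.isZmodMorphism.Build R LocT f0 f0_zmod.
HB.instance Definition _ := GRing.isMonoidMorphism.Build R LocT f0 f0_mon.

Lemma f0_inverts : inverts (f0 : {rmorphism R -> LocT}) S.
Proof.
move=> s hs; exists (mk 1 s); split.
  rewrite /f0 -[LHS]/(lmul (mk s 1) (mk 1 s)) (@mul_mk s 1 1 s 1 1) //; last exact: eqvxx.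
  by rewrite -[RHS]/(mk 1 1) (expand 1 S1 hs (mul1r s)) !mulr1 mul1r.
rewrite /f0 -[LHS]/(lmul (mk 1 s) (mk s 1)) (@mul_mk 1 s s 1 1 1) //; last exact: eqvxx.
by rewrite !mulr1.
Qed.

Lemma f0_ker r : f0 r = 0 -> N r.
Proof.
rewrite /f0 -[0]/(mk 0 1) => /(mk_inj S1 S1) h.
by have := h 1 1 (eqvxx _); rewrite /eqv /= !mulr1 subr0.
Qed.

Section LMap.
Variables (L : pzRingType) (iota : {rmorphism R -> L}).
Hypothesis hinv : inverts iota S.
Hypothesis hNk : forall r, N r -> iota r = 0.

Definition iv (s : R) : L :=
  match pselect (S s) with left hs => sval (cid (hinv s hs)) | right _ => 0 end.
Lemma ivP {s} : S s -> iota s * iv s = 1 /\ iv s * iota s = 1.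
Proof. by move=> hs; rewrite /iv; case: pselect => // h; case: cid => y []. Qed.

Lemma iv_r s x : S s -> iota s * x = 1 -> x = iv s.
Proof.
move=> hs e; have [_ h2] := ivP hs.
by rewrite -[x]mul1r -h2 -mulrA e mulr1.
Qed.
Lemma iv_l s x : S s -> x * iota s = 1 -> x = iv s.
Proof.
move=> hs e; have [h1 _] := ivP hs.
by rewrite -[x]mulr1 -h1 mulrA e mul1r.
Qed.
Lemma ivM s c : S s -> S (s * c) -> iota c * iv (s * c) = iv s.
Proof.
move=> hs hsc; apply: iv_r => //.
by rewrite mulrA -rmorphM; have [-> _] := ivP hsc.
Qed.
Lemma ivMM s t : S s -> S t -> iv (s * t) = iv t * iv s.
Proof.
move=> hs ht; apply: esym; apply: iv_l; first exact: SM.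
rewrite rmorphM mulrA -[iv t * iv s * iota s]mulrA.
by have [_ ->] := ivP hs; rewrite mulr1; have [_ ->] := ivP ht.
Qed.
Lemma iota_eqv {x y} : eqv x y -> iota x = iota y.
Proof. by move=> /hNk; rewrite rmorphB => /eqP; rewrite subr_eq0 => /eqP. Qed.

Definition h (X : LocT) : L := iota (rep X).1 * iv (rep X).2.

Lemma hmk a s : S s -> h (mk a s) = iota a * iv s.
Proof.
move=> hs; rewrite /h.
have hp := @rep_E a s hs; have hp2 := repS (mk a s).
set p := rep (mk a s) in hp hp2 *.
have [u [v [hu e]]] := hore s _ hp2.
have hv : eqv (p.1 * v) (a * u) := hp v u (eqv_eq (esym e)).
have hsu : S (s * u) by apply: SM.
rewrite -(@ivM p.2 v) //; last by rewrite -e.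
by rewrite -e mulrA -rmorphM (iota_eqv hv) rmorphM -mulrA ivM.
Qed.

Lemma h_zmod : zmod_morphism h.
Proof.
move=> X Y; have [a [s [hs ->]]] := loc_elim X; have [b [t [ht ->]]] := loc_elim Y.
have [u [v [hu e]]] := hore t _ hs.
rewrite -[mk a s - mk b t]/(ladd (mk a s) (lopp (mk b t))) opp_mk //.
have hsv : S (s * v) by rewrite -e; apply: SM.
rewrite (@add_mk a s (- b) t v u (s * v)) //; try exact: eqvxx; last exact: eqv_eq.
have k1 : iota v * iv (s * v) = iv s by apply: ivM.
have k2 : iota u * iv (s * v) = iv t by rewrite -e; apply: ivM => //; rewrite e.
rewrite !hmk //.
by rewrite rmorphD !rmorphM rmorphN mulrDl !mulNr -!mulrA k1 k2.
Qed.

Lemma h_mon : monoid_morphism h.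
Proof.
split.
  rewrite -[1]/(mk 1 1) hmk // rmorph1 mul1r.
  by have [+ _] := ivP S1; rewrite rmorph1 mul1r.
move=> X Y; have [a [s [hs ->]]] := loc_elim X; have [b [t [ht ->]]] := loc_elim Y.
have [u [v [hu e]]] := hore b _ hs.
rewrite -[mk a s * mk b t]/(lmul (mk a s) (mk b t)) (@mul_mk a s b t u v) //; last exact: eqv_eq.
have k : iv s * iota b = iota v * iv u.
  rewrite -[iv s * iota b]mulr1; have [<- _] := ivP hu.
  rewrite mulrA -(mulrA (iv s)) -rmorphM e rmorphM mulrA.
  by have [_ ->] := ivP hs; rewrite mul1r.
rewrite !hmk //; try exact: SM.
by rewrite ivMM // rmorphM -!mulrA (mulrA (iv s)) k !mulrA.
Qed.

HB.instance Definition _ := GRing.isZmodMorphism.Build LocT L h h_zmod.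
HB.instance Definition _ := GRing.isMonoidMorphism.Build LocT L h h_mon.

Lemma frac_form : universal_inverting S iota ->
  forall q : L, exists r s y, S s /\ is_inverse (iota s) y /\ q = iota r * y.
Proof.
move=> [_ univ] q.
have [g [hg _]] := univ LocT f0 f0_inverts.
have [gL [_ uL]] := univ L iota hinv.
have iv1 : iv 1 = 1 by have [+ _] := ivP S1; rewrite rmorph1 mul1r.
have hh : forall r, (h \o g) (iota r) = iota r.
  by move=> r /=; rewrite hg /f0 hmk // iv1 mulr1.
have e1 := uL (h \o g) hh q.
have e2 := uL idfun (fun r => erefl) q.
have eq : h (g q) = q := etrans e1 (esym e2).
have [a [s [hs eg]]] := loc_elim (g q).
exists a, s, (iv s); split => //; split; first exact: ivP hs.
by rewrite -eq eg hmk.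
Qed.

Lemma ker_sub : universal_inverting S iota -> forall r, iota r = 0 -> N r.
Proof.
move=> [_ univ] r hr; have [g [hg _]] := univ LocT f0 f0_inverts.
by apply: f0_ker; rewrite -hg hr rmorph0.
Qed.
End LMap.
End Loc.

Lemma ap_ideal (R : pzRingType) (S : R -> Prop) : ideal (aprime S).
Proof.
split; first by move=> b [] .
split; first by move=> x y hx hy b hb hc; apply: hb.2.1; [apply: hx | apply: hy].
move=> r x hx; split=> b hb hc; have := hx b hb hc; by case/(hb.2.2 r).
Qed.

Lemma ap_closed (R : pzRingType) (S : R -> Prop) s x :
  S s -> aprime S (s * x) -> aprime S x.
Proof. by move=> hs h b hb hc; apply: (hc s) => //; apply: h. Qed.

Lemma inv_uniq (A : pzRingType) (x y z : A) : x * y = 1 -> z * x = 1 -> y = z.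
Proof. by move=> h1 h2; rewrite -[y]mul1r -h2 -mulrA h1 mulr1. Qed.

Theorem theorem2p11 (R : pzRingType) (S : R -> Prop)
    (L : pzRingType) (iota : {rmorphism R -> L}) :
  right_Ore S -> universal_inverting S iota ->
  let a : R -> Prop := fun r => iota r = 0 in
  let a' : R -> Prop := aprime S in
  (right_localizable S iota <-> exists r, ~ a' r) /\
  ((exists r, ~ a' r) ->
   forall (R' : pzRingType) (pi' : {rmorphism R -> R'}),
     (forall y : R', exists r, pi' r = y) ->
     (forall r, pi' r = 0 <-> a' r) ->
     let S' : R' -> Prop := fun y => exists s, S s /\ pi' s = y in
     right_denominator S' /\
     (forall r, a r <-> ass_r S' (pi' r)) /\
     (forall (Q : pzRingType) (sigma : {rmorphism R' -> Q}),
        right_Ore_localization S' sigma ->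
        exists g : {rmorphism L -> Q},
          bijective g /\ (forall r, g (iota r) = sigma (pi' r)))).
Proof.
move=> [[S1 [S0 SM]] hore] [hinv univ] a a'.
have [A0 [AB AM]] := @ap_ideal R S.
have AC := @ap_closed R S.
have ap_ker : forall r, a' r -> iota r = 0.
  move=> r h; apply: (h (fun r => iota r = 0)); first split; first exact: rmorph0.
    split; first by move=> x y hx hy; rewrite rmorphB hx hy subrr.
    by move=> r0 x hx; rewrite !rmorphM hx mulr0 mul0r.
  move=> s x hs; rewrite rmorphM => h0.
  have [y [_ hy]] := hinv s hs.
  by rewrite -[iota x]mul1r -hy -mulrA h0 mulr0.
pose N r := exists u, S u /\ a' (r * u).
have N0 : N 0 by exists 1; split => //; rewrite mul0r.
have NB : forall x y, N x -> N y -> N (x - y).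
  move=> x y [u [hu hx]] [w [hw hy]].
  have [u' [v [hu' e]]] := hore w u hu.
  exists (w * u'); split; first exact: SM.
  rewrite mulrBl; apply: AB; last by rewrite mulrA; apply: (AM u' _ hy).2.
  by rewrite e mulrA; apply: (AM v _ hx).2.
have NMl : forall r x, N x -> N (r * x).
  by move=> r x [u [hu hx]]; exists u; split => //; rewrite -mulrA; apply: (AM r _ hx).1.
have NMr : forall r x, N x -> N (x * r).
  move=> r x [u [hu hx]]; have [u' [v [hu' e]]] := hore r u hu.
  by exists u'; split => //; rewrite -mulrA e mulrA; apply: (AM v _ hx).2.
have hNl : forall s x, S s -> N (s * x) -> N x.
  move=> s x hs [u [hu hx]]; exists u; split => //.
  by apply: (AC s) => //; rewrite mulrA.
have hNr : forall s x, S s -> N (x * s) -> N x.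
  move=> s x hs [u [hu hx]]; exists (s * u); split; first exact: SM.
  by rewrite mulrA.
have hNk : forall r, N r -> iota r = 0.
  move=> r [u [hu hr]]; have := ap_ker _ hr; rewrite rmorphM => h0.
  have [y [hy _]] := hinv u hu.
  by rewrite -[iota r]mulr1 -hy mulrA h0 mul0r.
have kerN : forall r, iota r = 0 -> N r :=
  @ker_sub R S N S1 SM hore N0 NB NMl NMr hNl hNr L iota (conj hinv univ).
have frac := @frac_form R S N S1 SM hore N0 NB NMl NMr hNl hNr L iota hinv hNk (conj hinv univ).
have a'1 : a' 1 -> forall r, a' r.
  by move=> h1 r; rewrite -[r]mulr1; apply: (AM r _ h1).1.
have N1 : N 1 -> a' 1.
  move=> [u [hu h]]; rewrite mul1r in h.
  by apply: (AC u) => //; rewrite mulr1.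
split.
  split.
    move=> [h10 _]; exists 1 => ha; apply: h10.
    by rewrite -(rmorph1 iota); apply: ap_ker.
  move=> [r hr]; split; last exact: frac.
  move=> e; apply: hr; apply: a'1; apply: N1; apply: kerN.
  by rewrite rmorph1 e.
move=> [r0 hr0] R' pi' surj kerpi S'.
have na1 : ~ a' 1 by move=> h; apply: hr0; apply: a'1.
have partb : forall r, a r <-> ass_r S' (pi' r).
  move=> r; split.
    move/kerN => [u [hu h]]; exists (pi' u); split; first by exists u.
    by rewrite -rmorphM; apply/kerpi.
  move=> [t [[u [hu <-]] e]]; apply: hNk; exists u; split => //.
  by apply/kerpi; rewrite rmorphM.
split; [|split; first exact: partb].
  split; first split.
    split; first by exists 1; split => //; rewrite rmorph1.
    split.
      move=> [s [hs /kerpi e]]; apply: na1; apply: (AC s) => //.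
      by rewrite mulr1.
    by move=> x y [s [hs <-]] [t [ht <-]]; exists (s * t); split; [apply: SM | rewrite rmorphM].
  move=> x y [s [hs <-]]; have [r <-] := surj x.
  have [u [v [hu e]]] := hore r s hs.
  exists (pi' u), (pi' v); split; first by exists u.
  by rewrite -!rmorphM e.
move=> x y [s [hs <-]]; have [r <-] := surj y; rewrite -rmorphM => /kerpi h.
exists 1; split; first by exists 1; split => //; rewrite rmorph1.
by rewrite mulr1; apply/kerpi; apply: (AC s).
move=> Q sigma [invQ [fracQ kerQ]].
have finv : inverts (sigma \o pi' : {rmorphism R -> Q}) S.
  by move=> s hs; apply: invQ; exists s.
have [g [hg _]] := univ Q (sigma \o pi') finv.
exists g; split; last by move=> r; rewrite hg.
have ginj : injective g.
  move=> x x' e.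
  have e0 : g (x - x') = 0 by rewrite rmorphB e subrr.
  have [r [s [y [hs [[hy1 hy2] exy]]]]] := frac (x - x').
  rewrite exy rmorphM hg /= in e0.
  have gy : g y * sigma (pi' s) = 1 by rewrite -[sigma (pi' s)]/((sigma \o pi') s) -hg -rmorphM hy2 rmorph1.
  have hs0 : sigma (pi' r) = 0.
    by rewrite -[sigma _]mulr1 -gy mulrA e0 mul0r.
  have /kerQ /partb hr : sigma (pi' r) = 0 := hs0.
  by apply/eqP; rewrite -subr_eq0 exy hr mul0r.
have gsurj : forall q, exists x, g x = q.
  move=> q; have [b [t [y [[s [hs ets]] [[hy1 hy2] eq]]]]] := fracQ q.
  have [r er] := surj b.
  have [z [hz1 hz2]] := hinv s hs.
  exists (iota r * z); rewrite rmorphM hg /= er eq; congr (_ * _).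
  have gz : g z * sigma t = 1 by rewrite -ets -[sigma (pi' s)]/((sigma \o pi') s) -hg -rmorphM hz2 rmorph1.
  exact: esym (@inv_uniq _ _ _ _ hy1 gz).
exists (fun q => sval (cid (gsurj q))).
  by move=> x; apply: ginj; case: cid.
by move=> q; case: cid.
Qed.
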